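(* Let $A$ be a finite set, $\Omega=A^{\mathbb{N}}$, and $\tilde\mu,\mu\in\Delta(\Omega)$ be such that $\tilde\mu$ weakly merges to $\mu$. Then for every $\epsilon>0$ there exists $N_0$ such that for every $N>N_0$ and every decision problem (finite decision set $D$ and payoff function $r:A\times D\to[0,1]$), every strategy that is $0$-optimal for $N$ periods under $\tilde\mu$ is $\epsilon$-optimal for $N$ periods under $\mu$.
   Context: For $\nu\in\Delta(\Omega)$ and $(a_0,\dots,a_{n-1})$ of positive $\nu$-probability, $\nu(\cdot\mid a_0,\dots,a_{n-1})\in\Delta(A)$ is the conditional distribution of the next outcome $a_n$. $\|p-q\|=\max_{a\in A}|p[a]-q[a]|$. $\tilde\mu$ weakly merges to $\mu$ if for $\mu$-a.e. $\omega=(a_0,a_1,\dots)$, $\frac1N\sum_{n=0}^{N-1}\|\tilde\mu(\cdot\mid a_0,\dots,a_{n-1})-\mu(\cdot\mid a_0,\dots,a_{n-1})\|\to0$. A strategy is a map $f:\bigcup_{n\ge0}A^n\to D$. For a belief $\nu$, $V_N^\nu(f)=\frac1N\int\sum_{n=0}^{N-1}r(a_n,f(a_0,\dots,a_{n-1}))\,\mathrm d\nu$. A strategy $f^*$ is $\epsilon$-optimal for $N$ periods under $\nu$ if $V_N^\nu(f)\le V_N^\nu(f^* )+\epsilon$ for every strategy $f$. *)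

(* Defs.v *)
From HB Require Import structures.
From mathcomp Require Import all_boot all_order all_algebra.
From mathcomp Require Import all_classical all_reals all_analysis.
Set Implicit Arguments. Unset Strict Implicit. Unset Printing Implicit Defensive.
Import Order.TTheory GRing.Theory Num.Theory.
Import numFieldNormedType.Exports.
Local Open Scope classical_set_scope.
Local Open Scope ring_scope.

(* The extra
   argument a0 only serves to make the type pointed (required by
   MathComp-Analysis measurable types); A is thus nonempty, which is no loss
   since Delta(A^N) is empty when A is. *)
Definition seqs (A : finType) (a0 : A) := nat -> A.
HB.instance Definition _ (A : finType) (a0 : A) := gen_eqMixin (seqs a0).
HB.instance Definition _ (A : finType) (a0 : A) := gen_choiceMixin (seqs a0).
Definition seqs_point (A : finType) (a0 : A) : seqs a0 := fun _ => a0.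
HB.instance Definition _ (A : finType) (a0 : A) :=
  isPointed.Build (seqs a0) (seqs_point a0).

Definition prefix (A : Type) (w : nat -> A) (n : nat) : seq A :=
  [seq w i | i <- iota 0 n].

Definition cyl (A : finType) (a0 : A) (s : seq A) : set (seqs a0) :=
  [set w | prefix w (size s) = s].
Arguments cyl {A} a0 s.

Definition cylinders (A : finType) (a0 : A) : set (set (seqs a0)) :=
  [set C | exists s : seq A, C = cyl a0 s].

Arguments cylinders {A} a0.
Definition Omega (A : finType) (a0 : A) := g_sigma_algebraType (cylinders a0).
Arguments Omega {A} a0.

(* nu(. | s)[a] = nu(cyl (s ++ [a])) / nu(cyl s)   (meaningful when nu(cyl s) > 0;
   the value is 0 otherwise by the convention x / 0 = 0) *)
Definition cond (R : realType) (A : finType) (a0 : A)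
  (nu : probability (Omega a0) R) (s : seq A) (a : A) : R :=
  fine (nu (cyl a0 (rcons s a))) / fine (nu (cyl a0 s)).

Definition cond_dist (R : realType) (A : finType) (a0 : A)
  (nu1 nu2 : probability (Omega a0) R) (s : seq A) : R :=
  \big[Num.max/0]_(a : A) `|cond nu1 s a - cond nu2 s a|.

Definition weakly_merges (R : realType) (A : finType) (a0 : A)
  (mt mu : probability (Omega a0) R) : Prop :=
  {ae mu, forall w : Omega a0,
     (fun N : nat => (N%:R)^-1 * \sum_(n < N) cond_dist mt mu (prefix w n))
       @ \oo --> (0 : R)}.

Definition value (R : realType) (A : finType) (a0 : A)
  (nu : probability (Omega a0) R) (D : finType) (r : A -> D -> R)
  (f : seq A -> D) (N : nat) : R :=
  (N%:R)^-1 * fine (\int[nu]_(w in [set: Omega a0])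
                      (\sum_(n < N) r (w n) (f (prefix w n)))%:E).

Definition eps_optimal (R : realType) (A : finType) (a0 : A)
  (nu : probability (Omega a0) R) (D : finType) (r : A -> D -> R)
  (fstar : seq A -> D) (N : nat) (eps : R) : Prop :=
  forall f : seq A -> D, value nu r f N <= value nu r fstar N + eps.

(* Main.v *)
Require Import Defs.
From HB Require Import structures.
From mathcomp Require Import all_boot all_order all_algebra.
From mathcomp Require Import all_classical all_reals all_analysis.
From mathcomp Require Import measurable_realfun lra ring.
Import Order.TTheory GRing.Theory Num.Theory.
Set Implicit Arguments. Unset Strict Implicit. Unset Printing Implicit Defensive.
Local Open Scope classical_set_scope.
Local Open Scope ring_scope.

Section Aux.
Local Notation prefix := Defs.prefix.
Context (R : realType) (A : finType) (a0 : A).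

Fixpoint hist (n : nat) : seq (seq A) :=
  if n is n'.+1 then [seq rcons h a | h <- hist n', a <- enum A] else [:: [::]].

Lemma mem_hist n s : (s \in hist n) = (size s == n).
Proof.
elim: n s => [|n IH] s /=; first by rewrite inE; case: s.
apply/allpairsP/idP => [[[h a] /= [hh _ ->]]|].
  by rewrite size_rcons eqSS -IH.
case/lastP: s => [//|h a]; rewrite size_rcons eqSS -IH => hh.
by exists (h, a); rewrite mem_enum.
Qed.

Lemma uniq_hist n : uniq (hist n).
Proof.
elim: n => [//|n IH] /=; apply: allpairs_uniq => //; first exact: enum_uniq.
by move=> [h a] [h' a'] _ _ /= /eqP; rewrite eqseq_rcons => /andP[/eqP-> /eqP->].
Qed.

Lemma size_prefix (w : nat -> A) n : size (prefix w n) = n.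
Proof. by rewrite size_map size_iota. Qed.

Lemma prefixS (w : nat -> A) n : prefix w n.+1 = rcons (prefix w n) (w n).
Proof. by rewrite /prefix -addn1 iotaD map_cat cats1. Qed.

Lemma mcyl (s : seq A) : measurable (cyl a0 s : set (Omega a0)).
Proof. by apply: sub_gen_smallest; exists s. Qed.

Definition Pr (nu : probability (Omega a0) R) s := fine (nu (cyl a0 s)).

Lemma PrE (nu : probability (Omega a0) R) s : nu (cyl a0 s) = (Pr nu s)%:E.
Proof. by rewrite /Pr fineK // fin_num_measure //; exact: mcyl. Qed.

Lemma indic_cyl (s : seq A) (w : nat -> A) :
  \1_(cyl a0 s) w = (prefix w (size s) == s)%:R :> R.
Proof.
rewrite indicE; case: (boolP (w \in cyl a0 s)) => [/set_mem ->|]; first by rewrite eqxx.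
by move=> /negP H; case: eqP => // E; case: H; apply/mem_set.
Qed.

Lemma sum_indic m (g : seq A -> R) (w : nat -> A) :
  \sum_(s <- hist m) g s * \1_(cyl a0 s) w = g (prefix w m).
Proof.
rewrite (eq_big_seq (fun s => if s == prefix w m then g s else 0)); last first.
  move=> s; rewrite mem_hist => /eqP <-; rewrite indic_cyl eq_sym.
  by case: eqP => _; rewrite ?mulr1 ?mulr0.
rewrite (bigD1_seq (prefix w m)) ?uniq_hist ?mem_hist ?size_prefix //=.
rewrite eqxx big1 ?addr0 // => s /negPf ->; done.
Qed.

Lemma meas_prefix m (g : seq A -> R) :
  measurable_fun [set: Omega a0] (fun w : Omega a0 => g (prefix w m)).
Proof.
rewrite (_ : (fun w : Omega a0 => g (prefix w m)) =
   (fun w => \sum_(s <- hist m) g s * \1_(cyl a0 s) w)); last first.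
  by apply/funext => w; rewrite sum_indic.
apply: measurable_sum => s; apply: measurable_realfun.measurable_funM => //.
exact: measurable_realfun.measurable_indic (mcyl s).
Qed.

Lemma emeas_prefix m (g : seq A -> R) :
  measurable_fun [set: Omega a0] (fun w : Omega a0 => (g (prefix w m))%:E).
Proof. exact: (measurable_realfun.measurable_EFinP _ _).2 (meas_prefix m g). Qed.

Lemma int_prefix (nu : probability (Omega a0) R) m (g : seq A -> R) :
  (forall s, 0 <= g s) ->
  (\int[nu]_(w in [set: Omega a0]) (g (prefix w m))%:E =
    (\sum_(s <- hist m) g s * Pr nu s)%:E)%E.
Proof.
move=> g0.
transitivity (\int[nu]_(w in [set: Omega a0])
   (\sum_(s <- hist m) ((g s)%:E * (\1_(cyl a0 s) w)%:E)))%E.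
  apply: eq_integral => w _; rewrite -sum_indic -sumEFin.
  by apply: eq_bigr => s _; rewrite EFinM.
rewrite ge0_integral_sum //; last first.
- move=> s w _; apply: mule_ge0; rewrite lee_fin ?g0 //.
- move=> s; apply: measurable_funeM.
  exact: (measurable_EFinP _ _).2 (measurable_indic (mcyl s)).
rewrite -sumEFin; apply: eq_bigr => s _.
rewrite ge0_integralZl_EFin //.
- rewrite (integral_indic _ _ (mcyl s)).
  have -> : (cyl a0 s `&` [set: Omega a0]) = cyl a0 s by exact: setIT.
  by rewrite EFinM; congr (_ * _)%E; exact: (PrE nu s).
- exact: measurableT.
- exact: (measurable_EFinP _ _).2 (measurable_indic (mcyl s)).
Qed.

Lemma sum_histS n (F : seq A -> R) :
  \sum_(s <- hist n.+1) F s = \sum_(h <- hist n) \sum_(a : A) F (rcons h a).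
Proof.
rewrite /= big_allpairs_dep; apply: eq_bigr => h _.
by rewrite big_enum.
Qed.

Lemma int_step (nu : probability (Omega a0) R) (D : finType) (r : A -> D -> R)
  (f : seq A -> D) n : (forall a d, 0 <= r a d) ->
  (\int[nu]_(w in [set: Omega a0]) (r (w n) (f (prefix w n)))%:E =
   (\sum_(h <- hist n) \sum_(a : A) Pr nu (rcons h a) * r a (f h))%:E)%E.
Proof.
move=> r0.
pose g := fun s : seq A => r (nth a0 s n) (f (take n s)).
transitivity (\int[nu]_(w in [set: Omega a0]) (g (prefix w n.+1))%:E)%E.
  apply: eq_integral => w _; rewrite /g prefixS nth_rcons size_prefix ltnn eqxx.
  by rewrite -cats1 take_size_cat ?size_prefix.
rewrite int_prefix; last by move=> s; exact: r0.
rewrite sum_histS; congr (_%:E); apply: eq_big_seq => h.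
rewrite mem_hist => /eqP hn; apply: eq_bigr => a _.
rewrite /g; have -> : take n (rcons h a) = h by rewrite -cats1 take_size_cat.
by rewrite nth_rcons hn ltnn eqxx mulrC.
Qed.

Lemma meas_step (D : finType) (r : A -> D -> R) (f : seq A -> D) n :
  measurable_fun [set: Omega a0] (fun w : Omega a0 => r (w n) (f (prefix w n))).
Proof.
rewrite (_ : (fun w : Omega a0 => r (w n) (f (prefix w n))) =
  (fun w : Omega a0 => (fun s => r (nth a0 s n) (f (take n s))) (prefix w n.+1))).
  exact: (meas_prefix n.+1 (fun s => r (nth a0 s n) (f (take n s)))).

apply/funext => w /=; rewrite prefixS nth_rcons size_prefix ltnn eqxx.
by rewrite -cats1 take_size_cat ?size_prefix.
Qed.

Definition S (nu : probability (Omega a0) R) (D : finType) (r : A -> D -> R)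
  (f : seq A -> D) N :=
  \sum_(n < N) \sum_(h <- hist n) \sum_(a : A) Pr nu (rcons h a) * r a (f h).

Lemma valueE (nu : probability (Omega a0) R) (D : finType) (r : A -> D -> R)
  (f : seq A -> D) N : (forall a d, 0 <= r a d) ->
  value nu r f N = N%:R^-1 * S nu r f N.
Proof.
move=> r0; rewrite /value /S; congr (_ * _).
rewrite (eq_integral (fun w : Omega a0 => \sum_(n < N) (r (w n) (f (prefix w n)))%:E)%E);
  last by move=> w _; rewrite sumEFin.
rewrite ge0_integral_sum //; last first.
- by move=> n w _; rewrite lee_fin.
- move=> n; exact: (measurable_EFinP _ _).2 (meas_step r f n).
under eq_bigr => n _ do rewrite (int_step nu f n r0).
by rewrite sumEFin.
Qed.

Lemma Pr_ge0 (nu : probability (Omega a0) R) s : 0 <= Pr nu s.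
Proof. by apply: fine_ge0; exact: measure_ge0. Qed.

Lemma cyl_rcons (h : seq A) a : cyl a0 (rcons h a) `<=` cyl a0 h.
Proof.
move=> w; rewrite /cyl /= size_rcons prefixS => /eqP.
by rewrite eqseq_rcons => /andP[/eqP ->].
Qed.

Lemma Pr_rcons (nu : probability (Omega a0) R) h a : Pr nu (rcons h a) <= Pr nu h.
Proof.
rewrite /Pr fine_le //; try (apply: fin_num_measure; exact: mcyl).
apply: le_measure; rewrite ?inE; try exact: mcyl.
exact: cyl_rcons.
Qed.

Lemma condE (nu : probability (Omega a0) R) h a :
  cond nu h a = Pr nu (rcons h a) * (Pr nu h)^-1.
Proof. by []. Qed.

Lemma cond_ge0 (nu : probability (Omega a0) R) h a : 0 <= cond nu h a.
Proof. by rewrite condE mulr_ge0 ?invr_ge0 ?Pr_ge0. Qed.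

Lemma Pr_rcons0 (nu : probability (Omega a0) R) h a : Pr nu h = 0 -> Pr nu (rcons h a) = 0.
Proof. by move=> h0; apply/le_anti; rewrite Pr_ge0 -h0 Pr_rcons. Qed.

Lemma cond_le1 (nu : probability (Omega a0) R) h a : cond nu h a <= 1.
Proof.
rewrite condE; have [->|hn0] := eqVneq (Pr nu h) 0; first by rewrite invr0 mulr0.
have hp : 0 < Pr nu h by rewrite lt0r hn0 Pr_ge0.
by rewrite ler_pdivrMr // mul1r Pr_rcons.
Qed.

Lemma Pr_cond (nu : probability (Omega a0) R) h a :
  Pr nu (rcons h a) = Pr nu h * cond nu h a.
Proof.
rewrite condE; have [h0|hn0] := eqVneq (Pr nu h) 0.
  by rewrite h0 mul0r Pr_rcons0.
by rewrite mulrC -mulrA mulVf // mulr1.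
Qed.

Lemma le_bigmax_seq (F : A -> R) (s : seq A) x : x \in s ->
  F x <= \big[Num.max/0]_(i <- s) F i.
Proof.
elim: s => [//|y s IH]; rewrite in_cons big_cons => /orP[/eqP ->|/IH H].
  by rewrite le_max lexx.
by rewrite le_max H orbT.
Qed.

Lemma cd_ge (mt mu : probability (Omega a0) R) h a :
  `|cond mu h a - cond mt h a| <= cond_dist mt mu h.
Proof.
rewrite distrC /cond_dist; apply: (le_bigmax_seq (fun a => `|cond mt h a - cond mu h a|)).
by rewrite mem_index_enum.
Qed.

Lemma cd_ge0 (mt mu : probability (Omega a0) R) h : 0 <= cond_dist mt mu h.
Proof. by apply: (big_ind (fun x => 0 <= x)) => // x y; rewrite le_max => ->. Qed.

Lemma cd_le1 (mt mu : probability (Omega a0) R) h : cond_dist mt mu h <= 1.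
Proof.
apply: (big_ind (fun x => x <= 1)) => //; first by move=> x y hx hy; rewrite ge_max hx hy.
move=> a _; have := cond_ge0 mt h a; have := cond_le1 mt h a.
have := cond_ge0 mu h a; have := cond_le1 mu h a.
rewrite ler_norml; move=> *; apply/andP; split; lra.
Qed.

Lemma sum_single N n (Y : R) (h : seq A) : (n < N)%N -> size h = n ->
  \sum_(n' < N) \sum_(h' <- hist n') (if h' == h then Y else 0) = Y.
Proof.
move=> nN hn.
rewrite (bigD1 (Ordinal nN)) //= (bigD1_seq h) ?uniq_hist ?mem_hist ?hn //= eqxx.
rewrite big1_seq ?addr0; last by move=> h' /andP[/negPf -> _].
rewrite big1 ?addr0 // => n' n'n; rewrite big1_seq // => h' /andP[_].
rewrite mem_hist => /eqP sh; case: eqP => // E; move: n'n.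
by rewrite E hn in sh; case/negP; apply/eqP/val_inj.
Qed.

Lemma local_opt (mt : probability (Omega a0) R) (D : finType) (r : A -> D -> R)
  (fstar : seq A -> D) N n h d : (0 < N)%N -> (forall a d, 0 <= r a d) ->
  eps_optimal mt r fstar N 0 -> (n < N)%N -> size h = n ->
  \sum_(a : A) Pr mt (rcons h a) * r a d <= \sum_(a : A) Pr mt (rcons h a) * r a (fstar h).
Proof.
move=> N0 r0 opt nN hn.
pose f := fun h' => if h' == h then d else fstar h'.
have := opt f; rewrite addr0 !valueE // ler_pM2l ?invr_gt0 ?ltr0n //.
set Y := \sum_(a : A) Pr mt (rcons h a) * r a d -
   \sum_(a : A) Pr mt (rcons h a) * r a (fstar h).
have -> : S mt r f N = S mt r fstar N + Y.
  rewrite -(sum_single Y nN hn) /S -big_split; apply: eq_bigr => n' _.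
  rewrite -big_split; apply: eq_bigr => h' _ /=.
  rewrite /f; case: eqP => [->|_]; last by rewrite addr0.
  by rewrite /Y addrC subrK.
by rewrite gerDl /Y subr_le0.
Qed.

Lemma diff_bound (mt mu : probability (Omega a0) R) (D : finType) (r : A -> D -> R)
  (fstar f : seq A -> D) N :
  (forall a d, 0 <= r a d <= 1) ->
  (forall n h d, (n < N)%N -> size h = n ->
     \sum_(a : A) Pr mt (rcons h a) * r a d <= \sum_(a : A) Pr mt (rcons h a) * r a (fstar h)) ->
  S mu r f N - S mu r fstar N <=
    #|A|%:R * \sum_(n < N) \sum_(h <- hist n) Pr mu h * cond_dist mt mu h.
Proof.
move=> r01 lopt.
rewrite /S -sumrB mulr_sumr; apply: ler_sum => n _.
rewrite -sumrB mulr_sumr !big_seq; apply: ler_sum => h; rewrite mem_hist => /eqP hn.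
rewrite -sumrB.
rewrite (eq_bigr (fun a => Pr mu h * (cond mu h a * r a (f h) - cond mu h a * r a (fstar h))));
  last by move=> a _; rewrite !(Pr_cond mu); ring.
rewrite -mulr_sumr mulrCA; apply: ler_wpM2l; first exact: Pr_ge0.
set d := f h; set ds := fstar h.
have -> : \sum_(a : A) (cond mu h a * r a d - cond mu h a * r a ds) =
  \sum_(a : A) cond mt h a * (r a d - r a ds) +
  \sum_(a : A) (cond mu h a - cond mt h a) * (r a d - r a ds).
  by rewrite -big_split; apply: eq_bigr => a _ /=; ring.
apply: (@le_trans _ _ (0 + #|A|%:R * cond_dist mt mu h)); last by rewrite add0r.
apply: lerD.
  rewrite (eq_bigr (fun a => (Pr mt h)^-1 *
     (Pr mt (rcons h a) * r a d - Pr mt (rcons h a) * r a ds))); last first.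
    by move=> a _; rewrite condE; ring.
  rewrite -mulr_sumr sumrB; apply: mulr_ge0_le0; first by rewrite invr_ge0 Pr_ge0.
  by rewrite subr_le0; apply: (lopt n).
apply: (@le_trans _ _ (\sum_(a : A) cond_dist mt mu h)).
  apply: ler_sum => a _.
  apply: (le_trans (ler_norm _)); rewrite normrM -[X in _ <= X]mulr1.
  apply: ler_pM => //; first exact: cd_ge.
  have := r01 a d; have := r01 a ds; case/andP => ? ?; case/andP => ? ?.
  rewrite ler_norml; apply/andP; split; lra.
by rewrite sumr_const mulr_natl.
Qed.

Definition u (mt mu : probability (Omega a0) R) (N : nat) :=
  N%:R^-1 * \sum_(n < N) \sum_(h <- hist n) Pr mu h * cond_dist mt mu h.

Lemma avg_le1 (x : nat -> R) N : (forall n, 0 <= x n <= 1) ->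
  0 <= N%:R^-1 * \sum_(n < N) x n <= 1.
Proof.
move=> x01; apply/andP; split.
  by apply: mulr_ge0; rewrite ?invr_ge0 ?ler0n //; apply: sumr_ge0 => n _; case/andP: (x01 n).
case: N => [|N]; first by rewrite invr0 mul0r.
rewrite ler_pdivrMl ?ltr0n // mulr1.
apply: (@le_trans _ _ (\sum_(n < N.+1) (1 : R))).
  by apply: ler_sum => n _; case/andP: (x01 n).
by rewrite sumr_const card_ord.
Qed.

Lemma u_cvg (mt mu : probability (Omega a0) R) :
  weakly_merges mt mu -> u mt mu @ \oo --> 0.
Proof.
move=> wm.
pose F N (w : Omega a0) := ((N%:R^-1 * \sum_(n < N) cond_dist mt mu (prefix w n))%:E)%E.
have mF N : measurable_fun [set: Omega a0] (F N).
  apply/measurable_EFinP; apply: measurable_funM => //.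
  by apply: measurable_sum => n; exact: meas_prefix.
have intF N : (\int[mu]_(w in [set: Omega a0]) F N w = (u mt mu N)%:E)%E.
  rewrite /F /u; under eq_integral => w _ do rewrite EFinM.
  rewrite ge0_integralZl_EFin //; first last.
  - apply/measurable_EFinP/measurable_sum => n; exact: meas_prefix.
  - by move=> w _; rewrite lee_fin; apply: sumr_ge0 => n _; exact: cd_ge0.
  rewrite EFinM; congr (_ * _)%E.
  under eq_integral => w _ do rewrite -sumEFin.
  rewrite ge0_integral_sum //; first last.
  - by move=> n w _; rewrite lee_fin cd_ge0.
  - by move=> n; exact: emeas_prefix.
  rewrite -sumEFin; apply: eq_bigr => n _.
  rewrite int_prefix; last by move=> s; exact: cd_ge0.
  by congr (_%:E); apply: eq_bigr => h _; rewrite mulrC.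
have Fb N w : 0 <= N%:R^-1 * \sum_(n < N) cond_dist mt mu (prefix w n) <= 1.
  by apply: (@avg_le1 (fun n => cond_dist mt mu (prefix w n)) N) => n; rewrite cd_ge0 cd_le1.
have f_f : {ae mu, forall w, [set: Omega a0] w -> F ^~ w @ \oo --> (cst 0%E w : \bar R)}.
  apply: filterS wm => w /= Hw _; apply: cvg_EFin; first exact: nearW.
  exact: Hw.
have ig := finite_measure_integrable_cst mu 1 (@measurableT _ (Omega a0)).
have f_g : {ae mu, forall w n, [set: Omega a0] w -> (`|F n w| <= (EFin \o cst (1%R : R)) w)%E}.
  apply: aeW => w n _; rewrite /F /= lee_fin.
  by case/andP: (Fb n w) => h0 h1; rewrite ger0_norm.
have [_ _ H] := dominated_convergence measurableT mF (measurable_cst _) f_f ig f_g.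
move: H; rewrite integral0.
have -> : (fun n => (\int[mu]_(x in [set: Omega a0]) F n x)%E) = (fun N => (u mt mu N)%:E).
  by apply/funext => N; exact: intF.
move/fine_cvg; exact.
Qed.

End Aux.

Theorem proposition1 (R : realType) (A : finType) (a0 : A)
  (mt mu : probability (Omega a0) R) :
  weakly_merges mt mu ->
  forall eps : R, 0 < eps ->
  exists N0 : nat, forall N : nat, (N0 < N)%N ->
  forall (D : finType) (r : A -> D -> R),
    (forall a d, 0 <= r a d <= 1) ->
    forall fstar : seq A -> D,
      eps_optimal mt r fstar N 0 -> eps_optimal mu r fstar N eps.
Proof.
move=> wm eps eps0.
have Kpos : (0 < #|A|)%N by apply/card_gt0P; exists a0.
set K : R := #|A|%:R.
have K0 : 0 < K by rewrite ltr0n.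
have := cvgr_dist_lt _ _ (u_cvg wm) _ (divr_gt0 eps0 K0).
case=> N0 _ HN0; exists N0 => N NN0 D r r01 fstar opt f.
have r0 a d : 0 <= r a d by case/andP: (r01 a d).
have Npos : (0 < N)%N by apply: leq_ltn_trans NN0.
have lopt n h d (nN : (n < N)%N) (hn : size h = n) :=
  local_opt d Npos r0 opt nN hn.
have H := diff_bound mu f r01 lopt.
rewrite !valueE //.
have H1 : N%:R^-1 * (S mu r f N - S mu r fstar N) <= K * u mt mu N.
  by rewrite /u mulrCA; apply: ler_wpM2l => //; rewrite invr_ge0 ler0n.
have H2 : K * u mt mu N <= eps.
  have := HN0 N (ltnW NN0); rewrite /= sub0r normrN => Hu.
  have Hu' : u mt mu N <= eps / K by apply: ltW; apply: le_lt_trans Hu; exact: ler_norm.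
  by rewrite -ler_pdivlMl // mulrC.
have := le_trans H1 H2; rewrite mulrBr => H3; lra.
Qed.
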